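(* Let $X$ be a metric space, let $A\subseteq X$ be nonempty and let $Y$ be a complete $\mathbb{R}$-tree. Then the multivalued mapping $\Phi:\mathcal{N}(A,Y)\to\mathcal{P}(\mathcal{N}(X,Y))$, assigning to each $f\in\mathcal{N}(A,Y)$ the set of all $f'\in\mathcal{N}(X,Y)$ with $f'|_A=f$, admits a nonexpansive selection, i.e. there is a map $\alpha:\mathcal{N}(A,Y)\to\mathcal{N}(X,Y)$ with $\alpha(f)\in\Phi(f)$ for all $f$ and $d_\infty(\alpha(f),\alpha(g))\le d_\infty(f,g)$.
   Context: An $\mathbb{R}$-tree is a uniquely geodesic metric space such that whenever two geodesic segments intersect only in a common endpoint, their union is a geodesic segment. $\mathcal{N}(A,Y)$ is the set of bounded nonexpansive maps $A\to Y$ with the supremum metric $d_\infty$. *)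

(* Defs.v *)
From Stdlib Require Import Reals.
From Coquelicot Require Import Coquelicot.
Open Scope R_scope.

Record metric (T : Type) (d : T -> T -> R) : Prop := {
  metric_eq0 : forall x y, d x y = 0 <-> x = y;
  metric_sym : forall x y, d x y = d y x;
  metric_tri : forall x y z, d x z <= d x y + d y z
}.

Definition geodesic_segment {T : Type} (d : T -> T -> R) (x y : T)
  (S : T -> Prop) : Prop :=
  exists c : R -> T,
    (forall s t, 0 <= s <= d x y -> 0 <= t <= d x y ->
        d (c s) (c t) = Rabs (s - t)) /\
    c 0 = x /\ c (d x y) = y /\
    (forall z, S z <-> exists t, 0 <= t <= d x y /\ z = c t).

Definition uniquely_geodesic {T : Type} (d : T -> T -> R) : Prop :=
  forall x y, exists S, geodesic_segment d x y S /\
    forall S', geodesic_segment d x y S' -> forall z, S' z <-> S z.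

Definition R_tree {T : Type} (d : T -> T -> R) : Prop :=
  metric T d /\ uniquely_geodesic d /\
  forall x y z (S1 S2 : T -> Prop),
    geodesic_segment d x y S1 -> geodesic_segment d y z S2 ->
    (forall w, (S1 w /\ S2 w) <-> w = y) ->
    geodesic_segment d x z (fun w => S1 w \/ S2 w).

Definition complete_metric {T : Type} (d : T -> T -> R) : Prop :=
  forall u : nat -> T,
    (forall eps, 0 < eps -> exists N, forall m n, (N <= m)%nat -> (N <= n)%nat ->
        d (u m) (u n) < eps) ->
    exists l, forall eps, 0 < eps -> exists N, forall n, (N <= n)%nat ->
        d (u n) l < eps.

Definition bounded_nonexp {B Y : Type} (dB : B -> B -> R) (dY : Y -> Y -> R)
  (f : B -> Y) : Prop :=
  (exists M, forall a b, dY (f a) (f b) <= M) /\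
  (forall a b, dY (f a) (f b) <= dB a b).

Definition d_sup {B Y : Type} (dY : Y -> Y -> R) (f g : B -> Y) : Rbar :=
  Lub_Rbar (fun r => exists a, r = dY (f a) (g a)).

Definition sub_dist {X : Type} (dX : X -> X -> R) (A : X -> Prop)
  (a b : {x : X | A x}) : R := dX (proj1_sig a) (proj1_sig b).

(* Main.v *)
Require Import Defs.
From Stdlib Require Import Reals Lra Classical ClassicalEpsilon.
From Coquelicot Require Import Coquelicot.
Open Scope R_scope.

Definition geo {Y : Type} (d : Y -> Y -> R) (x y : Y) (g : R -> Y) : Prop :=
  (forall s t, 0 <= s <= d x y -> 0 <= t <= d x y -> d (g s) (g t) = Rabs (s - t))
  /\ g 0 = x /\ g (d x y) = y.

Lemma d_refl {Y : Type} (d : Y -> Y -> R) : metric Y d -> forall x, d x x = 0.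
Proof. intros H x. apply (metric_eq0 _ _ H). reflexivity. Qed.

Lemma d_nonneg {Y : Type} (d : Y -> Y -> R) : metric Y d -> forall x y, 0 <= d x y.
Proof.
  intros H x y. pose proof (metric_tri _ _ H x y x) as H0.
  rewrite (d_refl d H) in H0. rewrite (metric_sym _ _ H y x) in H0. lra.
Qed.

Lemma geo_ex {Y : Type} (d : Y -> Y -> R) : R_tree d -> forall x y, exists g, geo d x y g.
Proof.
  intros [Hm [Hu Hg]] x y. destruct (Hu x y) as [S [[c [H1 [H2 [H3 _]]]] _]].
  exists c. split; auto.
Qed.

Lemma geo_d0 {Y : Type} (d : Y -> Y -> R) x y g : metric Y d -> geo d x y g ->
  forall s, 0 <= s <= d x y -> d x (g s) = s.
Proof.
  intros Hm [Hi [H0 H1]] s Hs. rewrite <- H0. pose proof (d_nonneg d Hm x y).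
  rewrite Hi; try lra. rewrite Rabs_left1; lra.
Qed.

Lemma tripod {Y : Type} (d : Y -> Y -> R) : R_tree d -> forall x y z g1 g2,
  geo d x y g1 -> geo d x z g2 ->
  exists t, 0 <= t <= d x y /\ t <= d x z /\ g1 t = g2 t /\
    d y z = (d x y - t) + (d x z - t) /\
    (forall s, 0 <= s <= t -> g1 s = g2 s).
Proof.
  intros HT x y z g1 g2 G1 G2.
  pose proof HT as [Hm [Hu Hgl]].
  pose proof (d_nonneg d Hm) as Hnn.
  set (D1 := d x y). set (D2 := d x z).
  set (E := fun s => 0 <= s /\ s <= D1 /\ s <= D2 /\ g1 s = g2 s).
  assert (E0 : E 0).
  { unfold E. destruct G1 as [_ [A1 _]]. destruct G2 as [_ [A2 _]].
    unfold D1, D2. rewrite A1, A2. pose proof (Hnn x y). pose proof (Hnn x z). repeat split; lra. }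
  destruct (completeness E) as [t [Hub Hle]].
  { exists D1. intros s Es. apply Es. }
  { exists 0. exact E0. }
  assert (t0 : 0 <= t) by (apply Hub; exact E0).
  assert (t1 : t <= D1) by (apply Hle; intros s Es; apply Es).
  assert (t2 : t <= D2) by (apply Hle; intros s Es; apply Es).
  destruct G1 as [I1 [A1 B1]]. destruct G2 as [I2 [A2 B2]].
  fold D1 in I1, B1. fold D2 in I2, B2.
  assert (Ht : g1 t = g2 t).
  { apply (metric_eq0 _ _ Hm). set (De := d (g1 t) (g2 t)).
    destruct (Req_dec De 0) as [h|h]; [exact h|].
    assert (Dp : 0 < De) by (pose proof (Hnn (g1 t) (g2 t)); unfold De in *; lra).
    exfalso.
    assert (Ex : exists s, E s /\ t - De / 3 < s).
    { apply NNPP. intro Hn.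
      assert (Hb : is_upper_bound E (t - De/3)).
      { intros s Es. apply Rnot_lt_le. intro Hs. apply Hn. exists s. split; auto. }
      apply Hle in Hb. lra. }
    destruct Ex as [s [Es Hs]].
    assert (st : s <= t) by (apply Hub; exact Es).
    destruct Es as [s0 [s1 [s2 s3]]].
    pose proof (metric_tri _ _ Hm (g1 t) (g1 s) (g2 t)) as T1.
    rewrite I1 in T1 by lra. rewrite s3 in T1. rewrite I2 in T1 by lra.
    rewrite Rabs_right in T1 by lra. rewrite Rabs_left1 in T1 by lra.
    fold De in T1. lra. }
  exists t. split; [lra|]. split; [lra|]. split; [exact Ht|]. split.
  -
    set (c := g1 t).
    assert (dyc : d y c = D1 - t).
    { unfold c. rewrite <- B1. fold D1. rewrite I1 by lra. rewrite Rabs_right; lra. }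
    assert (dcz : d c z = D2 - t).
    { unfold c. rewrite Ht. rewrite <- B2. fold D2. rewrite I2 by lra. rewrite Rabs_left1; lra. }
    set (S1 := fun w => exists u, 0 <= u <= d y c /\ w = g1 (D1 - u)).
    set (S2 := fun w => exists u, 0 <= u <= d c z /\ w = g2 (t + u)).
    assert (GS1 : geodesic_segment d y c S1).
    { exists (fun u => g1 (D1 - u)). split; [|split; [|split]].
      - intros s u Hs Hu'. rewrite I1 by lra. replace (D1 - s - (D1 - u)) with (-(s-u)) by ring. apply Rabs_Ropp.
      - rewrite Rminus_0_r. exact B1.
      - rewrite dyc. replace (D1 - (D1 - t)) with t by ring. reflexivity.
      - intro w. unfold S1. tauto. }
    assert (GS2 : geodesic_segment d c z S2).
    { exists (fun u => g2 (t + u)). split; [|split; [|split]].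
      - intros s u Hs Hu'. rewrite I2 by lra. f_equal. ring.
      - rewrite Rplus_0_r. unfold c. symmetry. exact Ht.
      - rewrite dcz. replace (t + (D2 - t)) with D2 by ring. exact B2.
      - intro w. unfold S2. tauto. }
    assert (Int : forall w, S1 w /\ S2 w <-> w = c).
    { intro w. split.
      - intros [[u [Hu1 Hw1]] [v [Hv1 Hw2]]].
        assert (e1 : d x w = D1 - u).
        { rewrite Hw1. rewrite <- A1. rewrite I1 by lra. rewrite Rabs_left1; lra. }
        assert (e2 : d x w = t + v).
        { rewrite Hw2. rewrite <- A2. rewrite I2 by lra. rewrite Rabs_left1; lra. }
        assert (Es : E (t + v)).
        { unfold E. repeat split; try lra.
          replace (t + v) with (D1 - u) by lra. rewrite <- Hw1.
          replace (D1 - u) with (t + v) by lra. rewrite <- Hw2. reflexivity. }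
        apply Hub in Es. assert (v = 0) by lra. subst v.
        rewrite Hw2, Rplus_0_r. unfold c. symmetry; exact Ht.
      - intro Hw. subst w. split.
        + exists (D1 - t). split; [lra|]. unfold c. f_equal. ring.
        + exists 0. split; [lra|]. rewrite Rplus_0_r. unfold c. exact Ht. }
    pose proof (Hgl y c z S1 S2 GS1 GS2 Int) as [c3 [I3 [A3 [B3 M3]]]].
    assert (Sc : S1 c).
    { exists (D1 - t). split; [lra|]. unfold c. f_equal. ring. }
    destruct (proj1 (M3 c) (or_introl Sc)) as [u [Hu1 Hcu]].
    assert (e1 : d y c = u).
    { rewrite Hcu, <- A3. rewrite I3 by lra. rewrite Rabs_left1; lra. }
    assert (e2 : d c z = d y z - u).
    { rewrite Hcu. rewrite <- B3 at 1. rewrite I3 by lra. rewrite Rabs_left1; lra. }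
    lra.
  -
    intros s Hs.
    set (c := g1 t).
    assert (dxc : d x c = t).
    { unfold c. rewrite <- A1. rewrite I1 by lra. rewrite Rabs_left1; lra. }
    set (S1 := fun w => exists u, 0 <= u <= d x c /\ w = g1 u).
    set (S2 := fun w => exists u, 0 <= u <= d x c /\ w = g2 u).
    assert (GS1 : geodesic_segment d x c S1).
    { exists g1. split; [|split; [|split]].
      - intros a b Ha Hb. apply I1; lra.
      - exact A1.
      - rewrite dxc. reflexivity.
      - intro w. unfold S1. tauto. }
    assert (GS2 : geodesic_segment d x c S2).
    { exists g2. split; [|split; [|split]].
      - intros a b Ha Hb. apply I2; lra.
      - exact A2.
      - rewrite dxc. unfold c. symmetry; exact Ht.
      - intro w. unfold S2. tauto. }
    destruct (Hu x c) as [S [_ Huniq]].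
    assert (H2 : S2 (g1 s)).
    { apply (Huniq S2 GS2). apply (Huniq S1 GS1). exists s. split; [lra|reflexivity]. }
    destruct H2 as [u [Hu1 Hsu]].
    assert (e1 : d x (g1 s) = s).
    { rewrite <- A1. rewrite I1 by lra. rewrite Rabs_left1; lra. }
    assert (e2 : d x (g2 u) = u).
    { rewrite <- A2. rewrite I2 by lra. rewrite Rabs_left1; lra. }
    rewrite Hsu in e1. rewrite e1 in e2. subst u. exact Hsu.
Qed.

Lemma vshape {Y : Type} (d : Y -> Y -> R) : R_tree d -> forall x y g z, geo d x y g ->
  exists t h, 0 <= t <= d x y /\ 0 <= h /\ d x z = t + h /\ d y z = d x y - t + h /\
   forall s, 0 <= s <= d x y -> d (g s) z <= Rabs (s - t) + h.
Proof.
  intros HT x y g z G.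
  pose proof HT as [Hm _].
  destruct (geo_ex d HT x z) as [g2 G2].
  destruct (tripod d HT x y z g g2 G G2) as [t [T1 [T2 [T3 [T4 _]]]]].
  exists t, (d (g t) z).
  pose proof G2 as [I2 [A2 B2]]. pose proof G as [I1 [A1 B1]].
  assert (hz : d (g t) z = d x z - t).
  { pose proof (d_nonneg d Hm x z). rewrite T3. rewrite <- B2 at 1. rewrite I2; try lra.
    rewrite Rabs_left1; lra. }
  split; [lra|]. split; [apply (d_nonneg d Hm)|]. split; [lra|]. split; [lra|].
  intros s Hs. pose proof (metric_tri _ _ Hm (g s) (g t) z). rewrite I1 in H by lra. lra.
Qed.

Lemma lip {Y I : Type} (d : Y -> Y -> R) : R_tree d ->
  forall (y y' : I -> Y) (r r' : I -> R) (de : R) (y0 p p' : Y),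
  0 <= de ->
  (forall i, d p (y i) <= r i) -> (forall i, d p' (y' i) <= r' i) ->
  (forall i, d p' (y i) <= r i + de) -> (forall i, d p (y' i) <= r' i + de) ->
  (forall q, (forall i, d q (y i) <= r i) -> d y0 p <= d y0 q) ->
  (forall q, (forall i, d q (y' i) <= r' i) -> d y0 p' <= d y0 q) ->
  d p p' <= de.
Proof.
  intros HT y y' r r' de y0 p p' Hde Kp Kp' Xp' Xp Mp Mp'.
  pose proof HT as [Hm _].
  rewrite (metric_sym _ _ Hm p p').
  destruct (Rle_dec (d p' p) de) as [h|h]; [exact h|]. exfalso.
  apply Rnot_le_lt in h.
  destruct (geo_ex d HT p' p) as [g G].
  assert (C1 : forall s, de <= s <= d p' p -> forall i, d (g s) (y i) <= r i).
  { intros s Hs i. destruct (vshape d HT p' p g (y i) G) as [t [h0 [T0 [H0 [E1 [E2 E3]]]]]].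
    specialize (E3 s ltac:(lra)). specialize (Xp' i). specialize (Kp i).
    destruct (Rle_dec t s).
    - rewrite Rabs_right in E3 by lra. lra.
    - rewrite Rabs_left in E3 by lra. lra. }
  assert (C2 : forall s, 0 <= s <= d p' p - de -> forall i, d (g s) (y' i) <= r' i).
  { intros s Hs i. destruct (vshape d HT p' p g (y' i) G) as [t [h0 [T0 [H0 [E1 [E2 E3]]]]]].
    specialize (E3 s ltac:(lra)). specialize (Xp i). specialize (Kp' i).
    destruct (Rle_dec t s).
    - rewrite Rabs_right in E3 by lra. lra.
    - rewrite Rabs_left in E3 by lra. lra. }
  destruct (vshape d HT p' p g y0 G) as [t [h0 [T0 [H0 [E1 [E2 E3]]]]]].
  rewrite (metric_sym _ _ Hm p y0) in E2. rewrite (metric_sym _ _ Hm p' y0) in E1.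
  destruct (Rle_dec de t).
  - pose proof (Mp (g t) (C1 t ltac:(lra))) as M1.
    pose proof (E3 t ltac:(lra)) as B1. rewrite (metric_sym _ _ Hm y0 (g t)) in M1.
    pose proof (Mp' (g (d p' p - de)) (C2 (d p' p - de) ltac:(lra))) as M2.
    pose proof (E3 (d p' p - de) ltac:(lra)) as B2. rewrite (metric_sym _ _ Hm y0 (g _)) in M2.
    replace (t - t) with 0 in B1 by ring. rewrite Rabs_R0 in B1.
    destruct (Rle_dec t (d p' p - de)).
    + rewrite Rabs_right in B2 by lra. lra.
    + rewrite Rabs_left in B2 by lra. lra.
  - pose proof (Mp (g de) (C1 de ltac:(lra))) as M1.
    pose proof (E3 de ltac:(lra)) as B1. rewrite (metric_sym _ _ Hm y0 (g _)) in M1.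
    rewrite Rabs_right in B1 by lra. lra.
Qed.

Lemma le_eps (a b : R) : (forall eps, 0 < eps -> a < b + eps) -> a <= b.
Proof.
  intro H. destruct (Rle_dec a b) as [h|h]; [exact h|].
  apply Rnot_le_lt in h. specialize (H ((a - b)/2) ltac:(lra)). lra.
Qed.

Lemma ex_pt {Y I : Type} (d : Y -> Y -> R) : R_tree d -> complete_metric d ->
  forall (y0 : Y) (i0 : I) (y : I -> Y) (r : I -> R),
  (forall i, 0 <= r i) -> (forall i j, d (y i) (y j) <= r i + r j) ->
  (exists B0, forall i, d y0 (y i) - r i <= B0) ->
  exists p, (forall i, d p (y i) <= r i) /\
    (forall B, 0 <= B -> (forall i, d y0 (y i) - r i <= B) -> d y0 p <= B).
Proof.
  intros HT Hc y0 i0 y r Hr Hadm [B0 HB0].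
  pose proof HT as [Hm _].
  pose proof (d_nonneg d Hm) as Hnn.
  set (E := fun s => exists i, s = d y0 (y i) - r i).
  destruct (completeness E) as [T [Hub Hle]].
  { exists B0. intros s [i ->]. apply HB0. }
  { exists (d y0 (y i0) - r i0). exists i0. reflexivity. }
  assert (sT : forall i, d y0 (y i) - r i <= T).
  { intro i. apply Hub. exists i. reflexivity. }
  assert (TB : forall B, (forall i, d y0 (y i) - r i <= B) -> T <= B).
  { intros B HB. apply Hle. intros s [i ->]. apply HB. }
  destruct (Rle_dec T 0) as [T0|T0].
  { exists y0. split.
    - intro i. specialize (sT i). lra.
    - intros B HB _. rewrite (d_refl d Hm). exact HB. }
  apply Rnot_le_lt in T0.
  set (sig := fun n : nat => T - T / (INR n + 1)).
  assert (sigb : forall n, 0 <= sig n < T).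
  { intro n. unfold sig. pose proof (pos_INR n).
    assert (0 < T / (INR n + 1)) by (apply Rdiv_lt_0_compat; lra).
    assert (T / (INR n + 1) <= T).
    { unfold Rdiv. rewrite <- (Rmult_1_r T) at 2. apply Rmult_le_compat_l; [lra|].
      rewrite <- Rinv_1. apply Rinv_le_contravar; lra. }
    lra. }
  assert (small : forall eps, 0 < eps -> exists N, forall n, (N <= n)%nat -> T - sig n < eps).
  { intros eps He. destruct (archimed_cor1 (eps / T)) as [N [HN N0]].
    { apply Rdiv_lt_0_compat; lra. }
    exists N. intros n Hn. unfold sig.
    pose proof (le_INR _ _ Hn). pose proof (lt_0_INR _ N0).
    assert (h1 : T < eps * INR N).
    { apply (Rmult_lt_compat_l (T * INR N)) in HN; [|nra].
      replace (T * INR N * / INR N) with T in HN by (field; lra).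
      replace (T * INR N * (eps / T)) with (eps * INR N) in HN by (field; lra). exact HN. }
    replace (T - (T - T / (INR n + 1))) with (T / (INR n + 1)) by ring.
    apply Rlt_div_l; [lra|]. nra. }
  assert (Hex : forall n, exists pr : I * (R -> Y),
     geo d y0 (y (fst pr)) (snd pr) /\ sig n <= d y0 (y (fst pr)) - r (fst pr)).
  { intro n. assert (exists i, sig n <= d y0 (y i) - r i) as [i Hi].
    { apply NNPP. intro Hn.
      assert (T <= sig n).
      { apply TB. intro i. apply Rnot_lt_le. intro h. apply Hn. exists i. lra. }
      specialize (sigb n). lra. }
    destruct (geo_ex d HT y0 (y i)) as [g G]. exists (i, g). simpl. auto. }
  set (u := fun n => proj1_sig (constructive_indefinite_description _ (Hex n))).
  assert (Hu : forall n, geo d y0 (y (fst (u n))) (snd (u n)) /\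
            sig n <= d y0 (y (fst (u n))) - r (fst (u n))).
  { intro n. unfold u. exact (proj2_sig (constructive_indefinite_description _ (Hex n))). }
  set (q := fun n => snd (u n) (sig n)).
  assert (Est : forall n j, d (q n) (y j) <= r j + (T - sig n)).
  { intros n j. destruct (Hu n) as [G Hs]. unfold q.
    set (i := fst (u n)) in *. set (g := snd (u n)) in *.
    destruct (vshape d HT y0 (y i) g (y j) G) as [t [h [T1 [H0 [E1 [E2 E3]]]]]].
    pose proof (Hr i). pose proof (Hr j). pose proof (sigb n). pose proof (Hadm i j).
    pose proof (sT j).
    specialize (E3 (sig n) ltac:(lra)).
    destruct (Rle_dec (sig n) t).
    - rewrite Rabs_left1 in E3 by lra. lra.
    - rewrite Rabs_right in E3 by lra. lra. }
  assert (Cau : forall n m, d (q n) (q m) <= Rabs (sig n - sig m)).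
  { intros n m. destruct (Hu n) as [G1 Hs1]. destruct (Hu m) as [G2 Hs2]. unfold q.
    set (i := fst (u n)) in *. set (g1 := snd (u n)) in *.
    set (j := fst (u m)) in *. set (g2 := snd (u m)) in *.
    destruct (tripod d HT y0 (y i) (y j) g1 g2 G1 G2) as [t [T1 [T2 [T3 [T4 T5]]]]].
    pose proof (Hr i). pose proof (Hr j). pose proof (sigb n). pose proof (sigb m).
    pose proof (Hadm i j).
    destruct G1 as [I1 _]. destruct G2 as [I2 _].
    destruct (Rle_dec (sig n) t); destruct (Rle_dec (sig m) t).
    - rewrite <- (T5 (sig m)) by lra. apply Req_le. apply I1; lra.
    - pose proof (metric_tri _ _ Hm (g1 (sig n)) (g1 t) (g2 (sig m))).
      rewrite I1 in H4 by lra. rewrite T3 in H4. rewrite I2 in H4 by lra.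
      rewrite Rabs_left1 in H4 by lra. rewrite Rabs_left1 in H4 by lra.
      rewrite Rabs_left1 by lra. lra.
    - pose proof (metric_tri _ _ Hm (g1 (sig n)) (g1 t) (g2 (sig m))).
      rewrite I1 in H4 by lra. rewrite T3 in H4. rewrite I2 in H4 by lra.
      rewrite Rabs_right in H4 by lra. rewrite Rabs_right in H4 by lra.
      rewrite Rabs_right by lra. lra.
    - exfalso. lra. }
  destruct (Hc q) as [l Hl].
  { intros eps He. destruct (small eps He) as [N HN]. exists N. intros m n Hm' Hn'.
    eapply Rle_lt_trans; [apply Cau|].
    pose proof (HN m Hm'). pose proof (HN n Hn'). pose proof (sigb m). pose proof (sigb n).
    unfold Rabs. destruct (Rcase_abs (sig m - sig n)); lra. }
  exists l. split.
  - intro j. apply le_eps. intros eps He.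
    destruct (Hl (eps/2) ltac:(lra)) as [N1 HN1]. destruct (small (eps/2) ltac:(lra)) as [N2 HN2].
    set (n := Nat.max N1 N2).
    specialize (HN1 n (Nat.le_max_l _ _)). specialize (HN2 n (Nat.le_max_r _ _)).
    pose proof (metric_tri _ _ Hm l (q n) (y j)). rewrite (metric_sym _ _ Hm l (q n)) in H.
    pose proof (Est n j). lra.
  - intros B HB0' HB. pose proof (TB B HB). apply le_eps. intros eps He.
    destruct (Hl eps He) as [N1 HN1]. specialize (HN1 N1 (le_n _)).
    pose proof (metric_tri _ _ Hm y0 (q N1) l).
    destruct (Hu N1) as [G _].
    assert (d y0 (q N1) = sig N1).
    { unfold q. apply (geo_d0 d _ _ _ Hm G). pose proof (sigb N1). pose proof (Hu N1).
      pose proof (Hr (fst (u N1))). lra. }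
    pose proof (sigb N1). lra.
Qed.

Theorem corollary5p9 (X : Type) (dX : X -> X -> R) (A : X -> Prop)
  (Y : Type) (dY : Y -> Y -> R) :
  metric X dX -> (exists a, A a) -> R_tree dY -> complete_metric dY ->
  exists alpha : ({x : X | A x} -> Y) -> (X -> Y),
    (forall f, bounded_nonexp (sub_dist dX A) dY f ->
       bounded_nonexp dX dY (alpha f) /\
       (forall a : {x : X | A x}, alpha f (proj1_sig a) = f a)) /\
    (forall f g, bounded_nonexp (sub_dist dX A) dY f ->
       bounded_nonexp (sub_dist dX A) dY g ->
       Rbar_le (d_sup dY (alpha f) (alpha g)) (d_sup dY f g)).
Proof.
  intros HX [a0 Ha0] HT Hc.
  pose proof HT as [HY _].
  pose proof (d_nonneg dX HX) as nX. pose proof (d_nonneg dY HY) as nY.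
  set (i0 := exist A a0 Ha0 : {x : X | A x}).
  destruct (classic (exists y : Y, True)) as [[y0 _]|HnY].
  2:{ exists (fun f _ => f i0). split.
      - intros f _. exfalso. apply HnY. exists (f i0). exact I.
      - intros f. exfalso. apply HnY. exists (f i0). exact I. }
  set (K := fun (f : {x : X | A x} -> Y) (x : X) (p : Y) =>
              forall b : {x : X | A x}, dY p (f b) <= dX x (proj1_sig b)).
  set (Pr := fun f x p => bounded_nonexp (sub_dist dX A) dY f ->
       K f x p /\ (forall B, 0 <= B -> (forall b, dY y0 (f b) - dX x (proj1_sig b) <= B) ->
                     dY y0 p <= B)).
  assert (exPr : forall f x, exists p, Pr f x p).
  { intros f x. destruct (classic (bounded_nonexp (sub_dist dX A) dY f)) as [Hf|Hf].
    - destruct Hf as [[M HM] Hne].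
      destruct (ex_pt dY HT Hc y0 i0 f (fun b => dX x (proj1_sig b))) as [p Hp].
      + intro i. apply nX.
      + intros i j. eapply Rle_trans; [apply Hne|]. unfold sub_dist.
        pose proof (metric_tri _ _ HX (proj1_sig i) x (proj1_sig j)).
        rewrite (metric_sym _ _ HX (proj1_sig i) x) in H. exact H.
      + exists (dY y0 (f i0) + M). intro i.
        pose proof (metric_tri _ _ HY y0 (f i0) (f i)). pose proof (HM i0 i).
        pose proof (nX x (proj1_sig i)). lra.
      + exists p. intros _. exact Hp.
    - exists y0. intro h. contradiction. }
  set (alpha := fun f x => proj1_sig (constructive_indefinite_description _ (exPr f x))).
  assert (Ha : forall f x, Pr f x (alpha f x)).
  { intros f x. unfold alpha. exact (proj2_sig (constructive_indefinite_description _ (exPr f x))). }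
  assert (Min : forall f x, bounded_nonexp (sub_dist dX A) dY f ->
     forall q, K f x q -> dY y0 (alpha f x) <= dY y0 q).
  { intros f x Hf q Kq. apply (proj2 (Ha f x Hf)); [apply nY|].
    intro b. pose proof (metric_tri _ _ HY y0 q (f b)). specialize (Kq b). lra. }
  exists alpha. split.
  - intros f Hf. pose proof Hf as [[M HM] Hne]. split; [split|].
    + set (B := Rabs (dY y0 (f i0) + M)).
      exists (2 * B). intros x x'.
      assert (Hb : forall z, dY y0 (alpha f z) <= B).
      { intro z. apply (proj2 (Ha f z Hf)); [apply Rabs_pos|].
        intro b. pose proof (metric_tri _ _ HY y0 (f i0) (f b)). pose proof (HM i0 b).
        pose proof (nX z (proj1_sig b)). pose proof (Rle_abs (dY y0 (f i0) + M)). unfold B. lra. }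
      pose proof (metric_tri _ _ HY (alpha f x) y0 (alpha f x')).
      rewrite (metric_sym _ _ HY (alpha f x) y0) in H.
      pose proof (Hb x). pose proof (Hb x'). lra.
    + intros x x'.
      apply (lip dY HT f f (fun b => dX x (proj1_sig b)) (fun b => dX x' (proj1_sig b))
               (dX x x') y0); try apply nX.
      * exact (proj1 (Ha f x Hf)).
      * exact (proj1 (Ha f x' Hf)).
      * intro i. pose proof (proj1 (Ha f x' Hf) i). simpl in *.
        pose proof (metric_tri _ _ HX x' x (proj1_sig i)).
        rewrite (metric_sym _ _ HX x' x) in H0. lra.
      * intro i. pose proof (proj1 (Ha f x Hf) i). simpl in *.
        pose proof (metric_tri _ _ HX x x' (proj1_sig i)). lra.
      * apply Min; exact Hf.
      * apply Min; exact Hf.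
    + intro a. pose proof (proj1 (Ha f (proj1_sig a) Hf) a). simpl in H.
      rewrite (d_refl dX HX) in H.
      apply (metric_eq0 _ _ HY). pose proof (nY (alpha f (proj1_sig a)) (f a)). lra.
  - intros f g Hf Hg.
    set (D := d_sup dY f g).
    assert (HD : forall b, Rbar_le (dY (f b) (g b)) D).
    { intro b. unfold D, d_sup. apply (proj1 (Lub_Rbar_correct _)). exists b. reflexivity. }
    unfold d_sup at 1. apply (proj2 (Lub_Rbar_correct _)).
    intros r [x ->].
    destruct D as [de| |] eqn:ED.
    + simpl. simpl in HD.
      assert (de0 : 0 <= de) by (pose proof (HD i0); pose proof (nY (f i0) (g i0)); lra).
      apply (lip dY HT f g (fun b => dX x (proj1_sig b)) (fun b => dX x (proj1_sig b)) de y0);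
        try exact de0.
      * exact (proj1 (Ha f x Hf)).
      * exact (proj1 (Ha g x Hg)).
      * intro i. pose proof (proj1 (Ha g x Hg) i). simpl in *.
        pose proof (metric_tri _ _ HY (alpha g x) (g i) (f i)).
        rewrite (metric_sym _ _ HY (g i) (f i)) in H0. pose proof (HD i). lra.
      * intro i. pose proof (proj1 (Ha f x Hf) i). simpl in *.
        pose proof (metric_tri _ _ HY (alpha f x) (f i) (g i)). pose proof (HD i). lra.
      * apply Min; exact Hf.
      * apply Min; exact Hg.
    + simpl. exact I.
    + exfalso. specialize (HD i0). simpl in HD. exact HD.
Qed.
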